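(* Let $M$ be a Hausdorff space satisfying the first axiom of countability and the Lindelöf condition (every open cover has a countable subcover), and let $\mathcal{B}(M)$ be the $\sigma$-algebra of Borel subsets of $M$. A subset $\mathfrak{p}\subseteq\mathcal{B}(M)$ is a point in $\mathcal{B}(M)$ if and only if there is $x\in M$ with $\mathfrak{p}=\{A\in\mathcal{B}(M): x\in A\}$ (i.e. $\mathfrak{p}$ is an atomic quasipoint of $\mathcal{B}(M)$).
   Context: A point in the $\sigma$-complete lattice $\mathcal{B}(M)$ (lattice operations: union and intersection) is a nonempty subset $\mathfrak{p}$ such that: (1) $\emptyset\notin\mathfrak{p}$; (2) $A,B\in\mathfrak{p}\Rightarrow A\cap B\in\mathfrak{p}$; (3) $A\in\mathfrak{p}$, $A\subseteq B\in\mathcal{B}(M)\Rightarrow B\in\mathfrak{p}$; (4) for every countable family $(A_n)$ in $\mathcal{B}(M)$ with $\bigcup_n A_n\in\mathfrak{p}$ there is $n$ with $A_n\in\mathfrak{p}$. *)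

(* Defs.v *)
From HB Require Import structures.
From mathcomp Require Import all_boot all_order all_algebra.
From mathcomp Require Import all_classical all_reals topology measurable_structure.

Local Open Scope classical_set_scope.

Definition Borel (M : topologicalType) : set (set M) := <<s open >>.

(* First axiom of countability: every point has a countable neighbourhood base
   (indexed by nat; repetitions allowed, so finite bases are included). *)
Definition first_countable (M : topologicalType) : Prop :=
  forall x : M, exists B : nat -> set M,
    (forall n, open (B n) /\ B n x) /\
    (forall U, nbhs x U -> exists n, B n `<=` U).

Definition lindelof (M : topologicalType) : Prop :=
  forall F : set (set M), F `<=` open -> \bigcup_(A in F) A = setT ->
    exists G : set (set M), [/\ G `<=` F, countable G & \bigcup_(A in G) A = setT].

Definition is_point {M : Type} (L : set (set M)) (p : set (set M)) : Prop :=
  p `<=` L /\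
      p !=set0 /\
      ~ p set0 /\
      (forall A B, p A -> p B -> p (A `&` B)) /\
      (forall A B, p A -> L B -> A `<=` B -> p B) /\
      (forall An : nat -> set M, (forall n, L (An n)) ->
          p (\bigcup_n An n) -> exists n, p (An n)).

(* Main.v *)
Require Import Defs.
From HB Require Import structures.
From mathcomp Require Import all_boot all_order all_algebra.
From mathcomp Require Import all_classical all_reals topology measurable_structure.
Local Open Scope classical_set_scope.

Section B.
Variable M : topologicalType.

Lemma BorelC (A : set M) : Borel M A -> Borel M (~` A).
Proof. by move=> /sigma_algebraCD; rewrite setTD. Qed.

Lemma Borel_bigcup (A : nat -> set M) : (forall n, Borel M (A n)) -> Borel M (\bigcup_n A n).
Proof. exact: sigma_algebra_bigcup. Qed.

Lemma Borel0 : Borel M set0.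
Proof. exact: sigma_algebra0. Qed.

Lemma BorelT : Borel M setT.
Proof. by rewrite -setC0; apply: BorelC; apply: Borel0. Qed.

Lemma Borel_open (A : set M) : open A -> Borel M A.
Proof. exact: sub_sigma_algebra. Qed.

Definition seq2 (A B : set M) : nat -> set M := fun n => if n is 0 then A else B.

Lemma bigcup_seq2 (A B : set M) : \bigcup_n seq2 A B n = A `|` B.
Proof.
apply/seteqP; split => x.
  by case=> [[|n]] _ /= h; [left|right].
by case=> h; [exists 0%N | exists 1%N].
Qed.

Lemma BorelU (A B : set M) : Borel M A -> Borel M B -> Borel M (A `|` B).
Proof. by move=> hA hB; rewrite -bigcup_seq2; apply: Borel_bigcup => -[|n]. Qed.

Lemma BorelI (A B : set M) : Borel M A -> Borel M B -> Borel M (A `&` B).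
Proof.
move=> hA hB; rewrite -[A `&` B]setCK setCI; apply: BorelC.
by apply: BorelU; apply: BorelC.
Qed.
End B.

Theorem proposition3p26 (M : topologicalType) :
  @hausdorff_space M -> first_countable M -> lindelof M ->
  forall p : set (set M),
    is_point (Borel M) p <->
    exists x : M, p = [set A | Borel M A /\ A x].
Proof.
move=> hH hF hL p; split; last first.
  move=> [x ->]; split; first by move=> A [].
  split; first by exists setT; split => //; apply: BorelT.
  split; first by case.
  split; first by move=> A B [hA xA] [hB xB]; split => //; apply: BorelI.
  split; first by move=> A B [hA xA] hB AB; split => //; apply: AB.
  by move=> An hAn [_ [n _ xn]]; exists n.
move=> [pL [[A0 pA0] [p0 [pI [pU pC]]]]].
have pT : p setT by apply: (pU A0) => //; apply: BorelT.
have pCo : forall A, Borel M A -> ~ p A -> p (~` A).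
  move=> A hA npA.
  have := pC (seq2 _ A (~` A)).
  rewrite bigcup_seq2 setUv => /(_ _ pT) [].
    by case=> //= n; apply: BorelC.
  by case=> //= n.
have [x hx] : exists x, forall U, open U -> U x -> p U.
  apply: contrapT => hn.
  have hn' : forall x, exists U, [/\ open U, U x & ~ p U].
    move=> x; apply: contrapT => hx; apply: hn; exists x => U oU Ux.
    by apply: contrapT => npU; apply: hx; exists U.
  pose F := [set U : set M | open U /\ ~ p U].
  have [G [GF cG GT]] : exists G : set (set M), [/\ G `<=` F, countable G & \bigcup_(A in G) A = setT].
    apply: hL; first by move=> U [].
    apply/seteqP; split => // y _.
    by have [U [oU Uy npU]] := hn' y; exists U.
  have /countable_injP [f finj] := cG.
  pose An n := \bigcup_(U in [set U | G U /\ f U = n]) U.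
  have := pC An.
  have -> : \bigcup_n An n = setT.
    apply/seteqP; split => // y _.
    have : (\bigcup_(A in G) A) y by rewrite GT.
    by case=> U GU Uy; exists (f U) => //; exists U.
  move=> /(_ _ pT) [].
    move=> n; apply: Borel_open; apply: bigcup_open => U [GU _].
    by case: (GF U GU).
  move=> n pAn.
  have [y [U [GU fU] Uy]] : An n !=set0.
    apply/set0P/negP => /eqP e; apply: p0; by rewrite -e.
  have sub : An n `<=` U.
    move=> z [V [GV fV] Vz].
    have -> : U = V by apply: finj; rewrite ?inE //; rewrite fU fV.
    done.
  have [oU npU] := GF U GU.
  by apply: npU; apply: (pU (An n)) => //; apply: Borel_open.
have [B [hB1 hB2]] := hF x.
have hA := hausdorff_accessible hH.
have L : forall A, Borel M A -> ~ A x -> ~ p A.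
  move=> A bA nAx pA.
  have := pC (fun n => A `&` ~` B n).
  have -> : \bigcup_n (A `&` ~` B n) = A.
    apply/seteqP; split; first by move=> y [n _ []].
    move=> y Ay.
    have : x != y by apply/eqP => e; apply: nAx; rewrite e.
    move=> /hA [U [oU xU yU]].
    have [n BU] := hB2 U (open_nbhs_nbhs (conj oU (set_mem xU))).
    exists n => //; split => //; move=> By; move/set_mem: yU; apply; exact: BU.
  move=> /(_ _ pA) [].
    by move=> n; apply: BorelI => //; apply: BorelC; apply: Borel_open; case: (hB1 n).
  move=> n pn.
  have pBn : p (B n) by case: (hB1 n) => oB Bx; apply: hx.
  apply: p0; apply: (pU _ _ (pI _ _ pn pBn)); first exact: Borel0.
  by move=> z [[_ nz] bz].
exists x; apply/seteqP; split.
  move=> A pA; split; first exact: pL.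
  by apply: contrapT => nAx; apply: (L A (pL _ pA)).
move=> A [bA Ax]; apply: contrapT => npA.
by apply: (L (~` A)); [apply: BorelC | | apply: pCo].
Qed.
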